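(* Let $\Sigma$ and $\Gamma$ be finite alphabets, each with at least two letters, let $a,b\in\Sigma$ be distinct letters, and let $w \in \{a,b\}^+$. The following are equivalent: 1. $\mathrm{E}_{\mathcal{I}}(w) = \infty$. 2. $\mathrm{E}_{\mathcal{I}}(w) > |w|$. 3. There exist integers $k, j_1, j_2, j_3 \ge 0$ such that $w = b^{j_1} (a b^{j_2})^k a b^{j_3}$ or $w = a^{j_1} (b a^{j_2})^k b a^{j_3}$.
   Context: For a nonempty word $v$ and integer $p\ge 0$, $v^{p/|v|}$ denotes the prefix of length $p$ of $vvv\cdots$. For a nonempty finite word $u$, $\mathrm{E}(u) = \sup\{ r \in \mathbb{Q} : u = v^r \text{ for some nonempty word } v\}$. $\mathcal{I}$ is the set of injective morphisms $\Sigma^* \to \Gamma^*$, and $\mathrm{E}_{\mathcal{I}}(w) = \sup\{\mathrm{E}(h(w)) : h \in \mathcal{I}\}$. *)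

(* Defs.v *)
From mathcomp Require Import all_boot all_order all_algebra.
From mathcomp Require Import boolp classical_sets reals constructive_ereal ereal.
From mathcomp Require Import Rstruct.

Set Implicit Arguments.
Unset Strict Implicit.
Unset Printing Implicit Defensive.

Import Order.TTheory GRing.Theory Num.Theory.
Local Open Scope classical_set_scope.
Local Open Scope ring_scope.

Notation RR := Rdefinitions.R.

Section Words.
Variable T : eqType.

(* v^{p/|v|} : the prefix of length p of v v v ... (for v nonempty) *)
Definition rpow (v : seq T) (p : nat) : seq T := take p (flatten (nseq p v)).

Definition is_pow (u v : seq T) (r : rat) : Prop :=
  v != [::] /\ exists p : nat, r = p%:R / (size v)%:R /\ u = rpow v p.

Definition Eexp (u : seq T) : \bar RR :=
  ereal_sup [set ((ratr r : RR)%:E) | r in [set r : rat | exists v, is_pow u v r]].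
End Words.

Definition is_morphism (S G : Type) (h : seq S -> seq G) : Prop :=
  forall u v, h (u ++ v) = h u ++ h v.

Definition EI (S : Type) (G : eqType) (w : seq S) : \bar RR :=
  ereal_sup [set Eexp (h w) | h in
    [set h : seq S -> seq G | is_morphism h /\ injective h]].

(* Main.v *)
Require Import Defs.
From mathcomp Require Import all_boot all_order all_algebra.
From mathcomp Require Import boolp classical_sets reals constructive_ereal ereal.
From mathcomp Require Import Rstruct.
From mathcomp Require Import zify.
Set Implicit Arguments.
Unset Strict Implicit.
Unset Printing Implicit Defensive.

Section Gen.
Variable T : eqType.
Implicit Types s u v x y p q : seq T.

Lemma catL s u v : s ++ u = s ++ v -> u = v.
Proof. by elim: s => //= c s IH [] /IH. Qed.

Lemma catR s u v : u ++ s = v ++ s -> u = v.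
Proof.
move=> E; have Hs : size u = size v.
  by have := congr1 size E; rewrite !size_cat => /eqP; rewrite eqn_add2r => /eqP.
by move/eqP: E; rewrite eqseq_cat // => /andP [/eqP].
Qed.

Lemma catLR x y u v : size x = size y -> x ++ u = y ++ v -> x = y /\ u = v.
Proof. by move=> Hs /eqP; rewrite eqseq_cat // => /andP [/eqP -> /eqP ->]. Qed.

Lemma size_flatten_nseq k x : size (flatten (nseq k x)) = k * size x.
Proof. by elim: k => //= k IH; rewrite size_cat IH mulSn. Qed.

Lemma flatten_nseqD m n x :
  flatten (nseq (m + n) x) = flatten (nseq m x) ++ flatten (nseq n x).
Proof. by rewrite nseqD flatten_cat. Qed.

Lemma flatten_nseqM m n x :
  flatten (nseq m (flatten (nseq n x))) = flatten (nseq (m * n) x).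
Proof. by elim: m => //= m IH; rewrite IH mulSn flatten_nseqD. Qed.

Lemma flatten_nseq_rot k p q :
  flatten (nseq k (p ++ q)) ++ p = p ++ flatten (nseq k (q ++ p)).
Proof.
elim: k => [|k IH] /=; first by rewrite cats0.
by rewrite -catA IH !catA.
Qed.

Lemma nth_flatten_nseq (x0 : T) k x i : i < k * size x ->
  nth x0 (flatten (nseq k x)) i = nth x0 x (i %% size x).
Proof.
elim: k i => [|k IH] i //= Hi.
rewrite nth_cat; case: ifP => Hlt; first by rewrite modn_small.
rewrite IH; last by rewrite mulSn in Hi; lia.
have Hle : size x <= i by rewrite leqNgt Hlt.
by rewrite -{2}(subnK Hle) modnDr.
Qed.


End Gen.

Section Gaps.
Variable T : eqType.
Variables a b : T.
Implicit Types s t u v : seq T.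
Definition ab s := all (fun c => (c == a) || (c == b)) s.

Lemma ab_cat s t : ab (s ++ t) = ab s && ab t.
Proof. exact: all_cat. Qed.

Lemma noa_nseq s : ab s -> a \notin s -> s = nseq (size s) b.
Proof.
elim: s => //= c s IH /andP [Hc Hs]; rewrite in_cons negb_or => /andP [Hca Ha].
by rewrite eq_sym (negbTE Hca) /= in Hc; rewrite (eqP Hc) {1}IH.
Qed.

Lemma split_first s : ab s ->
  exists g, s = nseq g b \/ exists t, s = nseq g b ++ a :: t /\ ab t.
Proof.
move=> Hs; case Ha: (a \in s); last first.
  by exists (size s); left; apply: noa_nseq => //; rewrite Ha.
set i := index a s.
have Hi : i < size s by rewrite index_mem.
have Hs' := Hs; rewrite -(cat_take_drop i s) ab_cat in Hs'.
case/andP: Hs' => H1 H2.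
have Hn : a \notin take i s.
  apply/negP => Hm.
  have : has (pred1 a) (take i s) by rewrite has_pred1.
  by rewrite has_take ?has_pred1 // /i /index ltnn.
exists i; right; exists (drop i.+1 s).
rewrite (drop_nth a Hi) nth_index // in H2.
rewrite -{1}(cat_take_drop i s) (drop_nth a Hi) nth_index //.
rewrite {1}(noa_nseq H1 Hn) size_takel ?(ltnW Hi) //.
by split => //; case/andP: H2.
Qed.

Lemma form_gaps (G0 : nat) n : forall t pre, size t <= n -> ab t ->
  (forall w1 w2 g, pre ++ a :: t = w1 ++ a :: nseq g b ++ a :: w2 -> g = G0) ->
  exists k j3, a :: t = flatten (nseq k (a :: nseq G0 b)) ++ a :: nseq j3 b.
Proof.
elim: n => [|n IH] t pre Hsz Ht Hg.
  by case: t Hsz Ht Hg => // _ _ _; exists 0, 0.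
have [g [Et|[t' [Et Ht']]]] := split_first Ht.
  by exists 0, g; rewrite Et.
have HG : g = G0 by apply: (Hg pre t'); rewrite Et.
have Hsz' : size t' <= n.
  by move: Hsz; rewrite Et size_cat /= size_nseq; lia.
have Hg' : forall w1 w2 g', (pre ++ a :: nseq g b) ++ a :: t' =
    w1 ++ a :: nseq g' b ++ a :: w2 -> g' = G0.
  by move=> w1 w2 g' E; apply: (Hg w1 w2); rewrite -E Et -catA.
have [k [j3 E]] := IH t' (pre ++ a :: nseq g b) Hsz' Ht' Hg'.
exists k.+1, j3; rewrite Et /= E -HG.
by rewrite -catA.
Qed.

Lemma form_of_gaps w (G0 : nat) : ab w -> a \in w ->
  (forall w1 w2 g, w = w1 ++ a :: nseq g b ++ a :: w2 -> g = G0) ->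
  exists k j1 j3, w = nseq j1 b ++ flatten (nseq k (a :: nseq G0 b)) ++ a :: nseq j3 b.
Proof.
move=> Hw Ha Hg.
have [g [Ew|[t [Ew Ht]]]] := split_first Hw.
  move: Ha; rewrite Ew mem_nseq => /andP [Hg0 /eqP Eab].
  exists 0, g.-1, 0; rewrite Eab /=.
  by rewrite -(nseqD g.-1 1) addn1 prednK.
have Hg' : forall w1 w2 g', nseq g b ++ a :: t = w1 ++ a :: nseq g' b ++ a :: w2 -> g' = G0.
  by move=> w1 w2 g' E; apply: (Hg w1 w2); rewrite Ew.
have [k [j3 E]] := @form_gaps G0 (size t) t (nseq g b) (leqnn _) Ht Hg'.
by exists k, g, j3; rewrite Ew E.
Qed.
End Gaps.

Section Per.
Variable G : eqType.
Variable x0 : G.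
Implicit Types u x y : seq G.

Definition periodic d u := forall i, i + d < size u -> nth x0 u i = nth x0 u (i + d).
Definition occ u i x := i + size x <= size u /\
  forall t, t < size x -> nth x0 u (i + t) = nth x0 x t.

Lemma occ_cat p x s : occ (p ++ x ++ s) (size p) x.
Proof.
split; first by rewrite !size_cat; lia.
by move=> t Ht; rewrite nth_cat ltnNge leq_addr /= addKn nth_cat Ht.
Qed.

Lemma occ_left u i x y : occ u i (x ++ y) -> occ u i x.
Proof.
case=> H1 H2; split; first by move: H1; rewrite size_cat; lia.
by move=> t Ht; rewrite H2 ?nth_cat ?Ht // size_cat; lia.
Qed.

Lemma occ_right u i x y : occ u i (x ++ y) -> occ u (i + size x) y.
Proof.
case=> H1 H2; split; first by move: H1; rewrite size_cat; lia.
move=> t Ht; rewrite -addnA H2 ?nth_cat ?size_cat; last by lia.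
by rewrite ltnNge leq_addr /= addKn.
Qed.

Lemma per_mod d u k : periodic d u -> 0 < d -> k < size u ->
  nth x0 u k = nth x0 u (k %% d).
Proof.
move=> Hp Hd; elim: k {-2}k (leqnn k) => [|n IH] k Hk Hku.
  by move: Hk; rewrite leqn0 => /eqP ->; rewrite mod0n.
case: (ltnP k d) => Hkd; first by rewrite modn_small.
have E : k = (k - d) + d by rewrite subnK.
rewrite {1}E -Hp; last by rewrite -E.
rewrite IH; last by lia.
  by rewrite {2}E modnDr.
by lia.
Qed.

Section Core.
Variables (u : seq G) (d : nat).
Hypothesis dpos : 0 < d.
Hypothesis dle : d <= size u.
Hypothesis Hper : periodic d u.
Hypothesis Hmin : forall e, 0 < e -> e < d -> ~ periodic e u.

Definition F m := nth x0 u (m %% d).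

Lemma F_u k : k < size u -> nth x0 u k = F k.
Proof. by move=> Hk; rewrite /F -per_mod. Qed.

Lemma F_mod m1 m2 : m1 = m2 %[mod d] -> F m1 = F m2.
Proof. by rewrite /F => ->. Qed.

Lemma sync_le i j x : i <= j -> occ u i x -> occ u j x -> d <= size x ->
  i = j %[mod d].
Proof.
move=> Hij [Hi1 Hi2] [Hj1 Hj2] Hdx.
set e := (j - i) %% d.
have He : e < d by rewrite /e ltn_mod.
case: (posnP e) => He0.
  have -> : j = i + (j - i) by rewrite subnKC.
  by rewrite -modnDmr -/e He0 addn0.
exfalso; apply: (Hmin He0 He) => k Hk.
have C1 : forall t, t < d -> F (i + t) = F (j + t).
  move=> t Ht; rewrite -!F_u; try lia.
  by rewrite Hi2 ?Hj2 //; lia.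
have C2 : forall m, F (i + m) = F (j + m).
  move=> m; rewrite (@F_mod (i + m) (i + m %% d)); last by rewrite modnDmr.
  rewrite (@F_mod (j + m) (j + m %% d)); last by rewrite modnDmr.
  by apply: C1; rewrite ltn_mod.
rewrite !F_u; try lia.
have Hdi : i <= d * i by rewrite leq_pmull.
rewrite (@F_mod k (i + (k + d * i - i))); last first.
  have -> : i + (k + d * i - i) = i * d + k by lia.
  by rewrite modnMDl.
rewrite C2; apply: F_mod.
have -> : j + (k + d * i - i) = (k + (j - i)) + i * d by lia.
by rewrite addnC modnMDl /e modnDmr.
Qed.

Lemma sync i j x : occ u i x -> occ u j x -> d <= size x -> i = j %[mod d].
Proof.
move=> Hi Hj Hd; case: (leqP i j) => H; first exact: sync_le Hi Hj Hd.
by apply/esym; apply: sync_le Hj Hi Hd; apply: ltnW.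
Qed.

Lemma core_comm X Y P P' g g' :
  occ u P X -> occ u (P + size X + g * size Y) X ->
  occ u P' X -> occ u (P' + size X + g' * size Y) X ->
  occ u (P' + size X + g * size Y) (flatten (nseq (g' - g) Y)) ->
  g < g' -> d <= size X -> 0 < size Y -> X ++ Y = Y ++ X.
Proof.
move=> O1 O2 O3 O4 O5 Hgg HdX HY.
have s1 : size X + g * size Y = 0 %[mod d].
  have := sync O2 O1 HdX; rewrite -addnA -{2}(addn0 P).
  by move/eqP; rewrite eqn_modDl => /eqP.
have s2 : size X + g' * size Y = 0 %[mod d].
  have := sync O4 O3 HdX; rewrite -addnA -{2}(addn0 P').
  by move/eqP; rewrite eqn_modDl => /eqP.
have s3 : P' = P %[mod d] by apply: sync O3 O1 HdX.
set M := (g' - g) * size Y.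
have HM : M = 0 %[mod d].
  have : size X + g * size Y + M = size X + g * size Y + 0 %[mod d].
    rewrite addn0 -addnA /M -mulnDl subnKC ?(ltnW Hgg) //.
    by rewrite s2 -s1.
  by move/eqP; rewrite eqn_modDl => /eqP.
have HMpos : 0 < M by rewrite /M muln_gt0 subn_gt0 Hgg.
set Gf := fun t => F (P + t).
have GX : forall t, t < size X -> nth x0 X t = Gf t.
  by move=> t Ht; case: O1 => H1 H2; rewrite -H2 // F_u //; lia.
have GYm : forall t, t < M -> nth x0 (flatten (nseq (g' - g) Y)) t = Gf t.
  move=> t Ht; case: O5 => H1 H2; rewrite size_flatten_nseq -/M in H1 H2.
  rewrite -H2 // F_u; last by lia.
  have EQ : P' + size X + g * size Y = P %[mod d].
    by rewrite -addnA -modnDmr s1 mod0n addn0 s3.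
  by apply: F_mod; rewrite -modnDml EQ modnDml.
have GY : forall t, Gf t = nth x0 Y (t %% size Y).
  move=> t; have -> : Gf t = Gf (t %% M).
    have dM : (d %| M) by rewrite /dvdn HM mod0n.
    apply: F_mod.
    by rewrite -[in RHS]modnDmr (modn_dvdm _ dM) modnDmr.
  rewrite -GYm ?ltn_mod // nth_flatten_nseq; last first.
    by rewrite -/M ltn_mod.
  by rewrite modn_dvdm // /M dvdn_mull.
have GXp : forall t, Gf (t + size X) = Gf t.
  move=> t; have -> : Gf (t + size X) = Gf (t + size X + g * size Y).
    rewrite !GY; congr nth.
    by rewrite [t + size X + _]addnC modnMDl.
  apply: F_mod.
  have -> : P + (t + size X + g * size Y) = (P + t) + (size X + g * size Y) by lia.
  by rewrite -modnDmr s1 mod0n addn0.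
apply: (@eq_from_nth _ x0); first by rewrite !size_cat addnC.
move=> t; rewrite size_cat => Ht; rewrite !nth_cat.
have GYp : forall s, Gf (s + size Y) = Gf s by move=> s; rewrite !GY modnDr.
transitivity (Gf t).
  case: ifP => H1; first by rewrite GX.
  rewrite -(modn_small (_ : t - size X < size Y)); last by lia.
  by rewrite -GY -(GXp (t - size X)) subnK // leqNgt H1.
case: ifP => H1; first by rewrite GY modn_small.
rewrite GX; last by lia.
by rewrite -(GYp (t - size Y)) subnK // leqNgt H1.
Qed.
End Core.
End Per.

Section Code.
Variable T : eqType.
Implicit Types X Y Z s u v : seq T.

Definition img (a b : T) X Y c := if c == a then X else if c == b then Y else [:: c].
Definition morph a b X Y w := flatten (map (img a b X Y) w).

Lemma morph_cat a b X Y u v : morph a b X Y (u ++ v) = morph a b X Y u ++ morph a b X Y v.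
Proof. by rewrite /morph map_cat flatten_cat. Qed.

Lemma morph_rcons a b X Y u c : morph a b X Y (rcons u c) = morph a b X Y u ++ img a b X Y c.
Proof. by rewrite -cats1 morph_cat /morph /= cats0. Qed.

Lemma morph_sym a b X Y : a != b -> morph a b X Y =1 morph b a Y X.
Proof.
move=> Hab w; rewrite /morph; congr flatten; apply: eq_map => c; rewrite /img.
case: (eqVneq c a) => [->|Hca]; last by case: (c == b).
by rewrite (negbTE Hab).
Qed.

Lemma morph_comp a b X Z : a != b ->
  morph a b X (X ++ Z) =1 (fun w => morph a b X Z (morph a b [:: a] [:: a; b] w)).
Proof.
move=> Hab; elim=> //= c w IH; rewrite /morph /= -/(morph _ _ _ _ w) IH.
rewrite -/(morph _ _ _ _ _) morph_cat; congr (_ ++ _).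
rewrite /img; case: ifP => [/eqP Eca|Hca]; [subst c|]; first by rewrite /morph /= /img eqxx cats0.
case: ifP => [/eqP Ecb|Hcb]; [subst c|].
  by rewrite /morph /= /img eqxx eq_sym (negbTE Hab) /= eqxx cats0.
by rewrite /morph /= /img Hca Hcb /=.
Qed.

Lemma morph_nil a b X Y w : X != [::] -> Y != [::] -> morph a b X Y w = [::] -> w = [::].
Proof.
case: w => [|c w] // HX HY; rewrite /morph /= /img.
case: ifP => _; first by case: X HX.
case: ifP => _; first by case: Y HY.
by [].
Qed.

Lemma phi_inj a b : a != b -> injective (morph a b [:: a] [:: a; b]).
Proof.
move=> Hab u; elim/last_ind: u => [|u c IH] v.
  by move=> E; apply/esym; apply: morph_nil (esym E).
case/lastP: v => [|v d]; first by move/morph_nil => /(_ isT isT); case: u {IH}.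
rewrite !morph_rcons => E.
have Hl : forall e s, last e (s ++ img a b [:: a] [:: a; b] c) = c.
  move=> e s; rewrite last_cat /img; case: (eqVneq c a) => [->|]//= _.
  by case: (eqVneq c b).
have Hl' : forall e s, last e (s ++ img a b [:: a] [:: a; b] d) = d.
  move=> e s; rewrite last_cat /img; case: (eqVneq d a) => [->|]//= _.
  by case: (eqVneq d b).
have Ecd : c = d by rewrite -(Hl c (morph a b [:: a] [:: a; b] u)) E Hl'.
subst d; congr rcons; apply: IH; exact: catR E.
Qed.

Lemma img_head a b X Y c d s t : X != [::] -> Y != [::] -> ab a b X -> ab a b Y ->
  ~~ ((c == a) || (c == b)) -> c :: s = img a b X Y d ++ t -> d = c.
Proof.
move=> HX HY HaX HaY Hc; rewrite /img.
case: ifP => _.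
  case: X HX HaX => // x X' _ /= /andP [Hx _] [Exc _].
  by rewrite Exc Hx in Hc.
case: ifP => _.
  case: Y HY HaY => // x X' _ /= /andP [Hx _] [Exc _].
  by rewrite Exc Hx in Hc.
by case=> ->.
Qed.

Theorem code2 n : forall a b X Y, a != b -> size X + size Y <= n ->
  ab a b X -> ab a b Y -> X ++ Y != Y ++ X -> injective (morph a b X Y).
Proof.
elim: n => [|n IHn] a b X Y Hab Hsz HaX HaY Hc.
  move: Hsz; rewrite leqn0 addn_eq0 !size_eq0 => /andP [/eqP HX /eqP HY].
  by rewrite HX HY eqxx in Hc.
have HX0 : forall X Y, X ++ Y != Y ++ X -> X != [::].
  by move=> [|//] Y0; rewrite cats0 /= eqxx.
have step : forall a b X Y u v, a != b -> size X + size Y <= n.+1 ->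
    ab a b X -> ab a b Y -> X ++ Y != Y ++ X -> size X <= size Y ->
    X ++ morph a b X Y u = Y ++ morph a b X Y v -> False.
  move=> a' b' X' Y' u v Hab' Hsz' HaX' HaY' Hc' Hle E.
  have EY : Y' = X' ++ drop (size X') Y'.
    have := congr1 (take (size X')) E.
    rewrite take_size_cat // takel_cat // => HXt.
    by rewrite {1}HXt cat_take_drop.
  move: (drop (size X') Y') EY => Z EY.
  have HZ0 : Z != [::] by apply/eqP => HZ; move: Hc'; rewrite EY HZ cats0 eqxx.
  have HaZ : ab a' b' Z by move: HaY'; rewrite EY ab_cat => /andP [].
  have HcZ : X' ++ Z != Z ++ X'.
    by apply/negP => /eqP HXZ; move: Hc'; rewrite EY -catA -HXZ eqxx.
  have HszZ : size X' + size Z <= n.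
    have HX'0 : 0 < size X' by rewrite lt0n size_eq0 (HX0 _ _ Hc').
    have HsY : size Y' = size X' + size Z by rewrite {1}EY size_cat.
    move: Hsz'; rewrite HsY => H'; clear -HX'0 H'; lia.
  have Hinj := IHn a' b' X' Z Hab' HszZ HaX' HaZ HcZ.
  have E' : morph a' b' X' Y' (a' :: u) = morph a' b' X' Y' (b' :: v).
    by rewrite /morph /= /img eqxx eq_sym (negbTE Hab') eqxx.
  rewrite EY !(@morph_comp a' b' X' Z Hab') in E'.
  have H2 := phi_inj Hab' (Hinj _ _ E').
  have H3 : a' = b' by case: H2.
  by rewrite H3 eqxx in Hab'.
have key : forall u v, morph a b X Y (a :: u) = morph a b X Y (b :: v) -> False.
  move=> u v; rewrite /morph /= /img eqxx eq_sym (negbTE Hab) eqxx.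
  rewrite -/(morph a b X Y u) -/(morph a b X Y v) -/(img a b X Y) => E.
  case: (leqP (size X) (size Y)) => Hle.
    exact: (step a b X Y u v).
  apply: (step b a Y X v u) => //.
  - by rewrite eq_sym.
  - by rewrite addnC.
  - by rewrite /ab; apply/allP => c Hc'; move/allP: HaY => /(_ c Hc'); rewrite orbC.
  - by rewrite /ab; apply/allP => c Hc'; move/allP: HaX => /(_ c Hc'); rewrite orbC.
  - by rewrite eq_sym.
  - exact: ltnW.
  - by rewrite -!(@morph_sym a b X Y Hab) E.
have HX : X != [::] by apply: HX0 Hc.
have HY : Y != [::] by apply: (HX0 Y X); rewrite eq_sym.
elim=> [|c u IH] [|d v] //.
- by move/esym/morph_nil => /(_ HX HY).
- by move/morph_nil => /(_ HX HY).
rewrite /morph /= -/(morph a b X Y u) -/(morph a b X Y v) => E.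
case: (eqVneq c d) => [Ecd|Hcd].
  by subst d; congr cons; apply: IH; apply: catL E.
exfalso.
case Hc1: ((c == a) || (c == b)); last first.
  have : c :: morph a b X Y u = img a b X Y d ++ morph a b X Y v.
    by rewrite -E /img; move: Hc1; case: ifP => //; case: ifP.
  by move/img_head => /(_ HX HY HaX HaY); rewrite Hc1 => /(_ isT) Edc; rewrite Edc eqxx in Hcd.
case Hd1: ((d == a) || (d == b)); last first.
  have : d :: morph a b X Y v = img a b X Y c ++ morph a b X Y u.
    by rewrite E /img; move: Hd1; case: ifP => //; case: ifP.
  by move/img_head => /(_ HX HY HaX HaY); rewrite Hd1 => /(_ isT) Edc; rewrite Edc eqxx in Hcd.
case/orP: Hc1 => /eqP Hc1; case/orP: Hd1 => /eqP Hd1; subst c d.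
- by rewrite eqxx in Hcd.
- by apply: (key u v); rewrite /morph /= E.
- by apply: (key v u); rewrite /morph /= E.
- by rewrite eqxx in Hcd.
Qed.
End Code.

Section Uniform.
Variables (A B : eqType) (f : A -> seq B) (l : nat).
Hypothesis Hsz : forall c, size (f c) = l.
Hypothesis Hl : 0 < l.
Hypothesis Hf : injective f.

Lemma size_fm w : size (flatten (map f w)) = l * size w.
Proof. by elim: w => [|c w IH] /=; [rewrite muln0 | rewrite size_cat IH Hsz mulnS]. Qed.

Lemma uniform_inj : injective (fun w => flatten (map f w)).
Proof.
elim=> [|c w IH] [|d v] //=.
- by move/(congr1 size); rewrite size_cat Hsz /=; lia.
- by move/(congr1 size); rewrite size_cat Hsz /=; lia.
move=> E; have [E1 E2] := catLR (etrans (Hsz c) (esym (Hsz d))) E.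
by rewrite (Hf E1) (IH _ E2).
Qed.
End Uniform.

Section Words.
Variable T : eqType.
Variables a b : T.
Hypothesis Hab : a != b.
Implicit Types s t u v X : seq T.
Local Notation B n := (nseq n b).

Lemma morph_flatten_nseq Y X k t :
  morph a b X Y (flatten (nseq k t)) = flatten (nseq k (morph a b X Y t)).
Proof. by elim: k => //= k IH; rewrite morph_cat IH. Qed.

Lemma morph_Bb X n : morph a b X [:: b] (B n) = B n.
Proof.
elim: n => //= n IH; rewrite /morph /= -/(morph _ _ _ _ _) IH /img.
by rewrite eq_sym (negbTE Hab) eqxx.
Qed.

Lemma morph_a X Y : morph a b X Y [:: a] = X.
Proof. by rewrite /morph /= /img eqxx cats0. Qed.

Lemma ab_nseqb n : ab a b (B n).
Proof. by elim: n => //= n ->; rewrite eqxx orbT. Qed.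

Lemma ab_flatten_nseq k t : ab a b t -> ab a b (flatten (nseq k t)).
Proof. by move=> Ht; elim: k => //= k IH; rewrite ab_cat Ht IH. Qed.

Lemma flatten_nseqS k t : flatten (nseq k t) ++ t = flatten (nseq k.+1 t).
Proof. by rewrite -addn1 flatten_nseqD /= cats0. Qed.

Lemma shape_lemma P Q k j1 j2 j3 :
  B j1 ++ flatten (nseq k ((P ++ Q) ++ B j2)) ++ ((P ++ Q) ++ B j3) =
  (B j1 ++ P) ++ flatten (nseq k ((Q ++ B j2) ++ P)) ++ Q ++ B j3.
Proof.
have H := flatten_nseq_rot k P (Q ++ B j2).
rewrite -!catA; congr (_ ++ _).
by rewrite catA H -!catA.
Qed.

Section Construct.
Variables (k j1 j2 j3 n : nat).
Definition L := j1 + j2 + j3 + 1.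
Definition Za := a :: B L.
Definition Xw := B j3.+1 ++ flatten (nseq n Za) ++ a :: B j1.
Definition sw := B (j1 + j3 + 1) ++ a :: B j2.
Definition wform := B j1 ++ flatten (nseq k (a :: B j2)) ++ a :: B j3.
Definition Mw := k * n.+1 + n.

Lemma theta_form :
  morph a b Xw [:: b] wform = B (j1 + j3 + 1) ++ flatten (nseq Mw Za) ++ a :: B (j1 + j3).
Proof.
rewrite /wform !morph_cat morph_flatten_nseq morph_Bb.
have -> : morph a b Xw [:: b] (a :: B j2) = Xw ++ B j2.
  by rewrite -[a :: _]cat1s morph_cat morph_a morph_Bb.
have -> : morph a b Xw [:: b] (a :: B j3) = Xw ++ B j3.
  by rewrite -[a :: _]cat1s morph_cat morph_a morph_Bb.
rewrite /Xw shape_lemma.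
have E1 : ((flatten (nseq n Za) ++ a :: B j1) ++ B j2) ++ B j3.+1 = flatten (nseq n.+1 Za).
  rewrite -!catA cat_cons -!nseqD -flatten_nseqS /Za /L.
  by congr (_ ++ a :: nseq _ b); lia.
rewrite E1 flatten_nseqM -nseqD; congr (_ ++ _); first by congr nseq; lia.
rewrite -catA catA -flatten_nseqD /= -nseqD.
by congr (_ ++ a :: nseq _ b); lia.
Qed.

Lemma theta_prefix : exists r,
  morph a b Xw [:: b] wform ++ r = flatten (nseq (Mw.+2) sw).
Proof.
exists (B (j2 + 1) ++ a :: B j2); rewrite theta_form.
have Hs : flatten (nseq Mw.+2 sw) =
    B (j1 + j3 + 1) ++ flatten (nseq Mw.+1 Za) ++ a :: B j2.
  rewrite -(flatten_nseqS Mw.+1 sw).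
  rewrite /sw catA flatten_nseq_rot -catA.
  congr (_ ++ _); congr (flatten (nseq _ _) ++ _).
  by rewrite /Za /= -nseqD /L; congr (a :: nseq _ b); lia.
rewrite Hs -(flatten_nseqS Mw Za) -!catA; congr (_ ++ (_ ++ _)).
rewrite /Za /L cat_cons catA -nseqD.
by have -> : j1 + j3 + (j2 + 1) = j1 + j2 + j3 + 1 by lia.
Qed.

Lemma size_sw : size sw = L.+1.
Proof. by rewrite /sw size_cat /= !size_nseq /L; lia. Qed.

Lemma theta_size : n * size sw <= size (morph a b Xw [:: b] wform).
Proof.
rewrite size_sw theta_form !size_cat size_flatten_nseq /Za /= !size_nseq /Mw.
rewrite mulnDl; nia.
Qed.

Lemma Xw_ab : ab a b Xw.
Proof.
rewrite /Xw !ab_cat ab_nseqb ab_flatten_nseq /=; first by rewrite eqxx ab_nseqb.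
by rewrite /Za /= eqxx ab_nseqb.
Qed.

Lemma Xw_noncomm : Xw ++ [:: b] != [:: b] ++ Xw.
Proof.
apply/eqP => E.
have Hj : j3.+1 < size Xw by rewrite /Xw !size_cat size_nseq /=; lia.
have E1 : nth a (Xw ++ [:: b]) j3.+1 = a.
  rewrite nth_cat Hj /Xw nth_cat size_nseq ltnn subnn.
  by case: n.
have E2 : nth a ([:: b] ++ Xw) j3.+1 = b.
  by rewrite cat1s /= /Xw nth_cat size_nseq ltnSn nth_nseq ltnSn.
by move: Hab; rewrite -E1 E E2 eqxx.
Qed.
End Construct.
End Words.

Section Rpow.
Variable T : eqType.
Implicit Types u v r : seq T.

Lemma size_rpow v p : v != [::] -> size (rpow v p) = p.
Proof.
move=> Hv; rewrite /rpow size_takel // size_flatten_nseq.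
by rewrite leq_pmulr // lt0n size_eq0.
Qed.

Lemma nth_rpow x0 v p i : v != [::] -> i < p ->
  nth x0 (rpow v p) i = nth x0 v (i %% size v).
Proof.
move=> Hv Hi; rewrite /rpow nth_take // nth_flatten_nseq //.
have : 0 < size v by rewrite lt0n size_eq0.
by nia.
Qed.

Lemma rpow_periodic x0 v p : v != [::] -> periodic x0 (size v) (rpow v p).
Proof.
move=> Hv i; rewrite size_rpow // => Hi.
by rewrite !nth_rpow // ?modnDr //; lia.
Qed.

Lemma prefix_rpow v u r K : v != [::] -> u ++ r = flatten (nseq K v) ->
  u = rpow v (size u).
Proof.
move=> Hv E; case: u E => [|x0 u'] E; first by rewrite /rpow take0.
apply: (@eq_from_nth _ x0); first by rewrite size_rpow.
move=> i Hi; rewrite nth_rpow //.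
have Hs := congr1 size E; rewrite size_cat size_flatten_nseq in Hs.
rewrite -(nth_flatten_nseq x0 (k := K)); last by lia.
by rewrite -E nth_cat Hi.
Qed.
End Rpow.

Section Morph.
Variables (S G : eqType) (h : seq S -> seq G).
Hypothesis Hm : is_morphism h.

Lemma hnil : h [::] = [::].
Proof.
have := congr1 size (Hm [::] [::]); rewrite size_cat /= => E.
by apply/eqP; rewrite -size_eq0; lia.
Qed.

Lemma hflat w : h w = flatten (map (fun c => h [:: c]) w).
Proof. by elim: w => [|c w IH] /=; [exact: hnil | rewrite -IH -Hm]. Qed.

Lemma hnseq g c : h (nseq g c) = flatten (nseq g (h [:: c])).
Proof. by rewrite hflat map_nseq. Qed.

Lemma has_long w d : size w * d < size (h w) -> has (fun c => d <= size (h [:: c])) w.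
Proof.
rewrite hflat; elim: w => [|c w IH] /=; first by rewrite ?mul0n.
rewrite size_cat mulSn; case: (leqP d (size (h [:: c]))) => //= Hc H.
by apply: IH; lia.
Qed.
End Morph.

Lemma occ_at3 (G : eqType) (x0 : G) p1 p2 p3 x s i :
  i = size p1 + size p2 + size p3 -> occ x0 (p1 ++ p2 ++ p3 ++ x ++ s) i x.
Proof.
move=> ->; have -> : p1 ++ p2 ++ p3 ++ x ++ s = (p1 ++ p2 ++ p3) ++ x ++ s by rewrite !catA.
rewrite (_ : size p1 + size p2 + size p3 = size (p1 ++ p2 ++ p3)); first exact: occ_cat.
by rewrite !size_cat addnA.
Qed.

Lemma exists_min (P : nat -> Prop) n : P n -> exists m, P m /\ forall k, k < m -> ~ P k.
Proof.
elim/ltn_ind: n => n IH Pn.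
case: (pselect (exists k, k < n /\ P k)) => [[k [Hk Pk]]|Hno]; first exact: IH Hk Pk.
by exists n; split => // k Hk Pk; apply: Hno; exists k.
Qed.

Section Long.
Variables (Sg G : eqType) (x0 : G) (a b : Sg) (h : seq Sg -> seq G).
Hypothesis Hm : is_morphism h.
Hypothesis Hi : injective h.
Hypothesis Hab : a != b.

Lemma form_from_long w d : ab a b w -> a \in w -> 0 < d -> d <= size (h w) ->
  periodic x0 d (h w) -> (forall e, 0 < e -> e < d -> ~ periodic x0 e (h w)) ->
  d <= size (h [:: a]) ->
  exists k j1 j2 j3, w = nseq j1 b ++ flatten (nseq k (a :: nseq j2 b)) ++ a :: nseq j3 b.
Proof.
move=> Hw Ha Hd Hdu Hp Hmin HdX.
set X := h [:: a]; set Y := h [:: b].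
have HY : 0 < size Y.
  rewrite lt0n size_eq0; apply/eqP => HY.
  by have := Hi (etrans HY (esym (hnil Hm))).
have Hnc : X ++ Y != Y ++ X.
  apply/eqP => E; have : h [:: a; b] = h [:: b; a].
    by rewrite -cat1s Hm -/X -/Y E -Hm.
  by move/Hi => [] /eqP; rewrite (negbTE Hab).
have Hdec : forall w1 w2 g, w = w1 ++ a :: nseq g b ++ a :: w2 ->
    h w = h w1 ++ X ++ flatten (nseq g Y) ++ X ++ h w2.
  move=> w1 w2 g ->; rewrite Hm -cat1s Hm -/X Hm (hnseq Hm) -/Y.
  by rewrite -cat1s Hm.
have key : forall w1 w2 g w1' w2' g', w = w1 ++ a :: nseq g b ++ a :: w2 ->
    w = w1' ++ a :: nseq g' b ++ a :: w2' -> g < g' -> False.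
  move=> w1 w2 g w1' w2' g' E E' Hgg.
  move/eqP: Hnc; apply.
  have D := Hdec _ _ _ E; have D' := Hdec _ _ _ E'.
  apply: (@core_comm _ x0 (h w) d Hd Hdu Hp Hmin X Y (size (h w1)) (size (h w1')) g g') => //.
  - by rewrite D; apply: occ_cat.
  - by rewrite D; apply: occ_at3; rewrite size_flatten_nseq.
  - by rewrite D'; apply: occ_cat.
  - by rewrite D'; apply: occ_at3; rewrite size_flatten_nseq.
  - have Eg : flatten (nseq g' Y) = flatten (nseq g Y) ++ flatten (nseq (g' - g) Y).
      by rewrite -flatten_nseqD subnKC // ltnW.
    rewrite D' Eg -catA.
    by apply: occ_at3; rewrite size_flatten_nseq.
case: (pselect (exists w1 w2 g, w = w1 ++ a :: nseq g b ++ a :: w2)) => [[w1 [w2 [g E]]]|Hno].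
  have Hg : forall w1' w2' g', w = w1' ++ a :: nseq g' b ++ a :: w2' -> g' = g.
    move=> w1' w2' g' E'; case: (ltngtP g g') => // H.
    - by exfalso; apply: (key _ _ _ _ _ _ E E' H).
    - by exfalso; apply: (key _ _ _ _ _ _ E' E H).
  have [k [j1 [j3 Ew]]] := @form_of_gaps _ a b w g Hw Ha Hg.
  by exists k, j1, g, j3.
have Hg : forall w1 w2 g, w = w1 ++ a :: nseq g b ++ a :: w2 -> g = 0.
  by move=> w1 w2 g E; exfalso; apply: Hno; exists w1, w2, g.
have [k [j1 [j3 Ew]]] := @form_of_gaps _ a b w 0 Hw Ha Hg.
by exists k, j1, 0, j3.
Qed.
End Long.

Import Order.TTheory GRing.Theory Num.Theory.
Local Open Scope ring_scope.

Lemma ab_swap (T : eqType) (a b : T) w : ab a b w -> ab b a w.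
Proof. by rewrite /ab; apply: sub_all => c; rewrite orbC. Qed.

Lemma main23 (Sg G : eqType) (a b : Sg) (h : seq Sg -> seq G) w v :
  is_morphism h -> injective h -> a != b -> w != [::] -> ab a b w ->
  v != [::] -> h w = rpow v (size (h w)) -> (size w * size v < size (h w))%N ->
  (exists k j1 j2 j3 : nat,
     w = nseq j1 b ++ flatten (nseq k (a :: nseq j2 b)) ++ a :: nseq j3 b) \/
  (exists k j1 j2 j3 : nat,
     w = nseq j1 a ++ flatten (nseq k (b :: nseq j2 a)) ++ b :: nseq j3 a).
Proof.
move=> Hm Hi Hab Hw0 Hw Hv E Hsz.
have Hu0 : (0 < size (h w))%N by lia.
case Eu: (h w) Hu0 => [//|x0 u'] _.
have Hpv : periodic x0 (size v) (h w).
  by have := rpow_periodic x0 (p := size (h w)) Hv; rewrite -E.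
have HP : (0 < size v)%N /\ periodic x0 (size v) (h w) /\ (size w * size v < size (h w))%N.
  by split => //; rewrite lt0n size_eq0.
have [d [[Hd [Hpd HNd]] Hmin]] := @exists_min (fun d => (0 < d)%N /\ periodic x0 d (h w) /\ (size w * d < size (h w))%N) _ HP.
have HN : (0 < size w)%N by rewrite lt0n size_eq0.
have Hdu : (d <= size (h w))%N by apply: leq_trans (ltnW HNd); rewrite leq_pmull.
have Hmin' : forall e, (0 < e)%N -> (e < d)%N -> ~ periodic x0 e (h w).
  move=> e He Hed Hpe; apply: (Hmin e Hed); split => //; split => //.
  by apply: leq_ltn_trans HNd; rewrite leq_mul2l ltnW ?orbT.
have /hasP [c Hc Hlong] := has_long Hm HNd.
have /orP [/eqP Eca|/eqP Ecb] := allP Hw c Hc; subst c.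
  left; exact: (@form_from_long _ _ x0 _ _ _ Hm Hi Hab _ _ Hw Hc Hd Hdu Hpd Hmin' Hlong).
right; apply: (@form_from_long _ _ x0 _ _ _ Hm Hi _ _ _ (ab_swap Hw) Hc Hd Hdu Hpd Hmin' Hlong).
by rewrite eq_sym.
Qed.

Section EexpSec.
Local Open Scope ereal_scope.

Lemma Eexp_ge (T : eqType) (u v : seq T) : v != [::] -> u = rpow v (size u) ->
  ((((size u)%:R / (size v)%:R)%R : RR)%:E <= Eexp u).
Proof.
move=> Hv E; apply: ereal_sup_ubound.
exists ((size u)%:R / (size v)%:R)%R.
  by exists v; split => //; exists (size u).
by rewrite fmorph_div !rmorph_nat.
Qed.

Lemma Eexp_gt (T : eqType) (u : seq T) (M : nat) : ((M%:R : RR)%:E < Eexp u) ->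
  exists v, v != [::] /\ u = rpow v (size u) /\ (M * size v < size u)%N.
Proof.
case/ereal_sup_gt => y [r [v [Hv [p [Er Eu]]]]] <-.
rewrite lte_fin Er fmorph_div !rmorph_nat => Hlt.
have Hs : size u = p by rewrite Eu size_rpow.
exists v; split => //; split; first by rewrite Hs.
have Hv0 : (0 < (size v)%:R :> RR)%R by rewrite ltr0n lt0n size_eq0.
by move: Hlt; rewrite ltr_pdivlMr // -natrM ltr_nat Hs.
Qed.
End EexpSec.

Lemma flatten_map_nseq (A B : Type) (f : A -> seq B) K s :
  flatten (map f (flatten (nseq K s))) = flatten (nseq K (flatten (map f s))).
Proof. by elim: K => //= K IH; rewrite map_cat flatten_cat IH. Qed.

Section EISec.
Local Open Scope ereal_scope.

Lemma EI_infty (S : Type) (G : eqType) (w : seq S) :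
  (forall n : nat, exists h : seq S -> seq G, [/\ is_morphism h, injective h &
     ((n%:R : RR)%:E <= Eexp (h w))]) -> EI G w = +oo.
Proof.
move=> H.
have Hge : forall n : nat, ((n%:R : RR)%:E <= EI G w).
  move=> n; have [h [Hm Hi Hle]] := H n.
  apply: le_trans Hle _; apply: ereal_sup_ubound.
  by exists h.
move: Hge; case: (EI G w) => [r||] // Hge.
  have := Hge (Num.truncn r).+1; rewrite lee_fin => Hle.
  by have := truncnS_gt r; rewrite ltNge Hle.
by have := Hge 0%N.
Qed.

Lemma construct (Sg Gm : finType) (a b : Sg) k j1 j2 j3 :
  (2 <= #|Gm|)%N -> a != b ->
  forall n : nat, exists h : seq Sg -> seq Gm, [/\ is_morphism h, injective h &
     ((n%:R : RR)%:E <= Eexp (h (wform a b k j1 j2 j3)))].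
Proof.
move=> HG Hab n.
have /card_gt1P [g0 [g1 [_ _ Hg]]] : (1 < #|Gm|)%N by [].
pose tau (c : Sg) := [seq (if i == (enum_rank c : nat) then g1 else g0) | i <- iota 0 #|Sg|].
have Htsz : forall c, size (tau c) = #|Sg| by move=> c; rewrite size_map size_iota.
have HSg : (0 < #|Sg|)%N by apply/card_gt0P; exists a.
have Htinj : injective tau.
  move=> c c' E.
  have := congr1 (fun s => nth g0 s (enum_rank c)) E.
  rewrite /tau !(nth_map 0%N) ?size_iota ?ltn_ord // !nth_iota ?ltn_ord // add0n eqxx.
  case: eqP => [/val_inj/enum_rank_inj //|_ Eg].
  by rewrite Eg eqxx in Hg.
pose X := Xw a b j1 j2 j3 n.
pose h := fun s => flatten (map tau (morph a b X [:: b] s)).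
exists h; split.
- by move=> u v; rewrite /h morph_cat map_cat flatten_cat.
- move=> u v /(uniform_inj Htsz HSg Htinj).
  apply: (@code2 _ (size X + size [:: b])) => //.
  + exact: Xw_ab.
  + by rewrite /= eqxx orbT.
  + exact: Xw_noncomm.
have [r Er] := theta_prefix Hab k j1 j2 j3 n.
set s := sw a b j1 j2 j3 in Er.
have Hs0 : s != [::] by rewrite -size_eq0 size_sw.
have Ets : h (wform a b k j1 j2 j3) ++ flatten (map tau r) =
    flatten (nseq (Mw k n).+2 (flatten (map tau s))).
  by rewrite /h -flatten_cat -map_cat Er flatten_map_nseq.
have Hts0 : flatten (map tau s) != [::].
  by rewrite -size_eq0 (size_fm Htsz) muln_eq0 negb_or -!lt0n HSg lt0n size_eq0.
have Hpre := prefix_rpow Hts0 Ets.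
apply: le_trans (Eexp_ge Hts0 Hpre).
rewrite lee_fin ler_pdivlMr; last by rewrite ltr0n lt0n size_eq0.
rewrite -natrM ler_nat /h !(size_fm Htsz).
have := theta_size Hab k j1 j2 j3 n; rewrite -/s -/X => Hn.
by rewrite mulnCA leq_mul2l Hn orbT.
Qed.

End EISec.

Unset Implicit Arguments.

Theorem corollary10 (Sigma Gamma : finType) (a b : Sigma) (w : seq Sigma) :
  (2 <= #|Sigma|)%N -> (2 <= #|Gamma|)%N -> a != b ->
  w != [::] -> all (fun c => (c == a) || (c == b)) w ->
  [/\ (EI Gamma w = +oo%E <-> (((size w)%:R : RR)%:E < EI Gamma w)%E),
      ((((size w)%:R : RR)%:E < EI Gamma w)%E <->
        exists k j1 j2 j3 : nat,
          w = nseq j1 b ++ flatten (nseq k (a :: nseq j2 b)) ++ a :: nseq j3 b \/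
          w = nseq j1 a ++ flatten (nseq k (b :: nseq j2 a)) ++ b :: nseq j3 a)
    & (EI Gamma w = +oo%E <->
        exists k j1 j2 j3 : nat,
          w = nseq j1 b ++ flatten (nseq k (a :: nseq j2 b)) ++ a :: nseq j3 b \/
          w = nseq j1 a ++ flatten (nseq k (b :: nseq j2 a)) ++ b :: nseq j3 a)].
Proof.
move=> HS HG Hab Hw0 Hw.
have H12 : EI Gamma w = +oo%E -> (((size w)%:R : RR)%:E < EI Gamma w)%E.
  by move=> ->; apply: ltry.
have H23 : (((size w)%:R : RR)%:E < EI Gamma w)%E ->
    exists k j1 j2 j3 : nat,
      w = nseq j1 b ++ flatten (nseq k (a :: nseq j2 b)) ++ a :: nseq j3 b \/
      w = nseq j1 a ++ flatten (nseq k (b :: nseq j2 a)) ++ b :: nseq j3 a.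
  case/ereal_sup_gt => y [h [Hm Hi] <-] Hlt.
  have [v [Hv [E Hsz]]] := Eexp_gt Hlt.
  case: (main23 Hm Hi Hab Hw0 Hw Hv E Hsz) => [[k [j1 [j2 [j3 Ew]]]]|[k [j1 [j2 [j3 Ew]]]]].
    by exists k, j1, j2, j3; left.
  by exists k, j1, j2, j3; right.
have H31 : (exists k j1 j2 j3 : nat,
      w = nseq j1 b ++ flatten (nseq k (a :: nseq j2 b)) ++ a :: nseq j3 b \/
      w = nseq j1 a ++ flatten (nseq k (b :: nseq j2 a)) ++ b :: nseq j3 a) ->
    EI Gamma w = +oo%E.
  case=> k [j1 [j2 [j3 [Ew|Ew]]]]; rewrite Ew; apply: EI_infty.
    exact: (construct k j1 j2 j3 HG Hab).
  by apply: (construct k j1 j2 j3 HG); rewrite eq_sym.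
split; split.
- exact: H12.
- by move=> H; apply: H31; apply: H23.
- exact: H23.
- by move=> H; apply: H12; apply: H31.
- by move=> H; apply: H23; apply: H12.
- exact: H31.
Qed.
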